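(* Let $S$ be a numerical semigroup with minimal generators $a_1<a_2<\cdots<a_\nu$, with embedding dimension $\nu=\nu(S)\ge10$. If $a_2>\frac{c(S)+\mu(S)}{3}$ and $$\mu(S)\le\frac{8}{25}\nu^2+\frac15\nu-\frac54,$$ then $S$ satisfies Wilf's conjecture, i.e. $\nu(S)|L(S)|\ge c(S)$.
   Context: A numerical semigroup is a submonoid $S\subseteq\mathbb{N}$ with finite complement. $\nu(S)$ is the number of minimal generators, $\mu(S)=a_1$ the multiplicity, $c(S)$ the conductor (least integer with $c(S)+\mathbb{N}\subseteq S$), and $L(S)=\{x\in S:0\le x<c(S)\}$. *)

(* Defs.v *)
From mathcomp Require Import all_boot.
Set Implicit Arguments. Unset Strict Implicit. Unset Printing Implicit Defensive.

Definition numerical_semigroup (S : pred nat) : Prop :=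
  [/\ 0 \in S,
      (forall x y, x \in S -> y \in S -> x + y \in S) &
      exists N, forall n, N <= n -> n \in S].

Definition minimal_generator (S : pred nat) (x : nat) : Prop :=
  [/\ x \in S, 0 < x &
      ~ (exists y z, [/\ y \in S, z \in S, 0 < y, 0 < z & x = y + z])].

Definition is_conductor (S : pred nat) (c : nat) : Prop :=
  (forall n, c <= n -> n \in S) /\
  (forall c', (forall n, c' <= n -> n \in S) -> c <= c').

Definition card_L (S : pred nat) (c : nat) : nat :=
  count (fun x => x \in S) (iota 0 c).

(* Main.v *)
Require Import Defs.
From mathcomp Require Import all_boot.
From mathcomp Require Import zify.
From Stdlib Require Import Classical.


Lemma count_class_aux m w d : 0 < m ->
  d <= m * count (fun x => (w <= x) && (x %% m == w %% m)) (iota 0 (w + d)) < d + m.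
Proof.
move=> mpos; elim: d => [|d IH].
  have -> : count (fun x => (w <= x) && (x %% m == w %% m)) (iota 0 (w + 0)) = 0.
    rewrite addn0 (eq_in_count (a2 := pred0)) ?count_pred0 //.
    move=> x; rewrite mem_iota => /andP [_ hx] /=.
    by rewrite leqNgt hx.
  by rewrite muln0.
rewrite (addnS w d) -[(w + d).+1]addn1 iotaD count_cat add0n /= addn0.
move: IH; set N := count _ _ => IH.
have -> : (w <= w + d) = true by rewrite leq_addr.
rewrite /=.
have hmod : (w + d == w %[mod m]) = (m %| d) by rewrite eqn_mod_dvd ?leq_addr // addKn.
rewrite hmod.
case: (boolP (m %| d)) => hd /=.
- case/dvdnP: hd => t ht.
  have eN : N = t.
    move: IH; rewrite ht => /andP [h1 h2].
    apply/eqP; rewrite eqn_leq; apply/andP; split.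
    + rewrite -ltnS -(ltn_pmul2l mpos); lia.
    + rewrite -(leq_pmul2l mpos); lia.
  subst N; rewrite eN ht; apply/andP; split; nia.
- rewrite addn0; move/andP: IH => [h1 h2]; apply/andP; split; last by lia.
  rewrite ltn_neqAle h1 andbT; apply/negP => /eqP e.
  by move: hd; rewrite e dvdn_mulr.
Qed.

Lemma count_class m w c : 0 < m -> w < c + m ->
  c <= w + m * count (fun x => (w <= x) && (x %% m == w %% m)) (iota 0 c) < c + m.
Proof.
move=> mpos hw.
case: (leqP w c) => hwc.
  have := count_class_aux m w (c - w) mpos. rewrite subnKC //. lia.
have -> : count (fun x => (w <= x) && (x %% m == w %% m)) (iota 0 c) = 0.
  rewrite (eq_in_count (a2 := pred0)) ?count_pred0 //.
  move=> x; rewrite mem_iota => /andP [_ hx] /=.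
  by rewrite leqNgt (ltn_trans hx hwc).
rewrite muln0 addn0; lia.
Qed.

Lemma ds_sorted (t : seq nat) b : sorted ltn t -> all (fun x => b <= x) t ->
  size t * (2 * b + size t) <= 2 * sumn t + size t.
Proof.
elim: t b => [|x t IH] b //= hs /andP [hb ha].
have hp := order_path_min ltn_trans hs.
have := IH x.+1 (path_sorted hs) hp.
nia.
Qed.

Lemma ds (s : seq nat) : uniq s -> all (fun x => 0 < x) s -> size s * (size s).+1 <= 2 * sumn s.
Proof.
move=> us ps.
have pe : perm_eq (sort leq s) s by apply: permEl; apply: perm_sort.
have st : sorted ltn (sort leq s).
  by rewrite ltn_sorted_uniq_leq sort_uniq us sort_sorted //; exact: leq_total.
have := @ds_sorted (sort leq s) 1 st.
rewrite size_sort (perm_sumn pe) (perm_all _ pe) ps => /(_ isT).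
lia.
Qed.

Lemma sum_bool_count (s : seq nat) (P : pred nat) : \sum_(i <- s) (P i : nat) = count P s.
Proof. by elim: s => [|x s IH]; rewrite ?big_nil ?big_cons ?IH. Qed.

Lemma inj_sum m M (P B : pred nat) (f : nat -> nat) :
  (forall r, r < m -> P r -> f r < M /\ B (f r)) ->
  (forall r1 r2, r1 < m -> r2 < m -> P r1 -> P r2 -> f r1 = f r2 -> r1 = r2) ->
  \sum_(0 <= r < m) (P r : nat) <= \sum_(0 <= u < M) (B u : nat).
Proof.
move=> hf hinj.
rewrite !sum_bool_count /index_iota !subn0 -!size_filter.
have <- : size (map f [seq x <- iota 0 m | P x]) = size [seq x <- iota 0 m | P x] by rewrite size_map.
apply: uniq_leq_size.
  rewrite map_inj_in_uniq ?filter_uniq ?iota_uniq //.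
  move=> x y; rewrite !mem_filter !mem_iota /= => /andP [px hx] /andP [py hy].
  by apply: hinj.
move=> y /mapP [x]; rewrite mem_filter mem_iota /= => /andP [px hx] ->.
have [h1 h2] := hf x hx px.
by rewrite mem_filter h2 mem_iota.
Qed.

Lemma sum_pick m g (f : nat -> nat) : g < m -> \sum_(0 <= s < m) (g == s) * f s = f g.
Proof.
elim: m => [|m IH] //= hg.
rewrite big_nat_recr //=.
move: hg; rewrite ltnS leq_eqVlt => /orP [/eqP ->|gm]; last first.
  rewrite IH // (_ : (g == m) = false) ?mul0n ?addn0 //; apply/negP => /eqP e; lia.
rewrite eqxx mul1n big1_seq ?add0n // => i; rewrite mem_index_iota => /andP [_ hi].
rewrite (_ : (m == i) = false) //; apply/negP => /eqP e; lia.
Qed.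

Lemma exch m (P : pred nat) (g f : nat -> nat) : (forall r, r < m -> P r -> g r < m) ->
  \sum_(0 <= r < m) P r * f (g r) =
  \sum_(0 <= s < m) (\sum_(0 <= r < m) (P r && (g r == s) : nat)) * f s.
Proof.
move=> hg.
under [RHS]eq_bigr do rewrite big_distrl /=.
rewrite exchange_big_nat /=.
apply: eq_big_nat => r /andP [_ hr].
case: (boolP (P r)) => pr /=.
  by rewrite mul1n sum_pick // hg.
by rewrite mul0n big1.
Qed.

Lemma arith (nu m p k : nat) : 10 <= nu -> m = nu + p -> 100 * m + 125 <= 32 * nu ^ 2 + 20 * nu ->
  2 * p <= k * k.+1 -> 6 * m * p <= 2 * m * nu * k + p * p.+1.
Proof.
move=> h10 hm hb hk.
case: (posnP p) => [->|ppos]; first by rewrite !muln0.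
have key : 5 * p + nu <= 2 * nu * k + 1.
  have [h1|h2] := leqP (5 * k) (4 * nu - 8).
  - case: k hk h1 => [|u] hk h1.
    + rewrite mul0n in hk. lia.
    + have [v hv] : exists v, 4 * nu = v + 8 + 5 * u.+1 by exists (4 * nu - 8 - 5 * u.+1); lia.
      have : 0 <= u * v by [].
      nia.
  - nia.
subst m. nia.
Qed.

Lemma ar1 x m : 0 < m -> 0 < x -> x <= x - m -> False. Proof. lia. Qed.
Lemma ar2 y g : y - g = 0 -> g <= y -> y = g. Proof. lia. Qed.
Lemma ar3 wr y z g : wr = y + z -> g <= y -> wr = y - g + (g + z). Proof. lia. Qed.
Lemma ar4 wr u v m : wr = u + v -> m <= u -> wr - m = u - m + v. Proof. lia. Qed.
Lemma ar5 wr u v m : wr = u + v -> m <= u -> m <= wr. Proof. lia. Qed.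
Lemma ar_cl (wr y z g g' g'' A c m : nat) : wr = y + z -> g <= y -> g' <= y - g -> g'' <= z ->
  A <= g -> A <= g' -> A <= g'' -> wr < c + m -> c + m < 3 * A -> False.
Proof. lia. Qed.
Lemma ar_yz y z A c m wr : wr = y + z -> wr < c + m -> A <= y -> A <= z -> m < A -> (y < c) && (z < c).
Proof. move=> *; apply/andP; split; lia. Qed.

Lemma ar6 d x nu : d <= nu -> 0 < x -> d * x + nu <= nu * x + d.
Proof.
move=> h1 h2.
have [e ->] : exists e, nu = d + e by exists (nu - d); lia.
have [y ->] : exists y, x = y.+1 by exists x.-1; lia.
rewrite !mulnS !mulnDl; lia.
Qed.
Lemma ar7 c m nr ws wt ns nt : c <= ns * m + ws -> c <= nt * m + wt ->
  2 * c + m * nr <= nr * m + (ws + wt) + m * (ns + nt).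
Proof. rewrite mulnDr [m * ns]mulnC [m * nt]mulnC [m * nr]mulnC. lia. Qed.
Lemma ar8 E c m : E < c + m -> E + (c + m - E) = c + m. Proof. lia. Qed.

Lemma final_ar (c m nu p k L n0 X Y Z EE : nat) : 0 < m -> m = nu + p -> c <= n0 * m ->
  n0 + X + Y <= L -> Z + nu * k <= nu * X + 2 * p -> p * (2 * c) + m * Y <= EE + m * Z ->
  2 * EE + p * p.+1 <= 2 * (p * (c + m)) -> 6 * m * p <= 2 * m * nu * k + p * p.+1 -> c <= nu * L.
Proof.
move=> mpos hm h0 hL F4 F6 F7 AR.
have s1 : 2 * (p * c) + 2 * (m * Y) + p * p.+1 <= 2 * (p * m) + 2 * (m * Z).
  move: F6 F7; rewrite !mulnDr !mulnA; lia.
have s2 : m * Z + m * (nu * k) <= m * (nu * X) + m * (2 * p) by rewrite -!mulnDr leq_mul2l F4 orbT.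
have s3 : p * c <= m * (nu * X).
  move: s1 s2 AR; rewrite !mulnDr !mulnA; lia.
have s4 : c * nu <= nu * (n0 * m) by rewrite mulnC leq_mul2l h0 orbT.
have s5 : m * (nu * (n0 + X + Y)) <= m * (nu * L) by rewrite leq_mul2l leq_mul2l hL !orbT.
have s6 : c * m <= m * (nu * L).
  move: s3 s4 s5; rewrite {1 2}hm !mulnDr !mulnA; lia.
by rewrite -(leq_pmul2l mpos) mulnC.
Qed.

Lemma leq_sum_lt m (F G : nat -> nat) : (forall i, i < m -> F i <= G i) ->
  \sum_(0 <= i < m) F i <= \sum_(0 <= i < m) G i.
Proof.
elim: m => [|m IH] h; first by rewrite !big_geq.
rewrite !big_nat_recr //=; apply: leq_add; last exact: h.
by apply: IH => i hi; apply: h; apply: ltnW.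
Qed.
Lemma ar9 E1 E2 N : E1 < N -> E2 < N -> N - E1 = N - E2 -> E1 = E2. Proof. lia. Qed.
Lemma ar10 EE s P q : EE + s = P -> q <= 2 * s -> 2 * EE + q <= 2 * P. Proof. lia. Qed.

Theorem proposition4p6 (S : pred nat) (a : seq nat) (c : nat) :
  numerical_semigroup S ->
  sorted ltn a ->
  (forall x, minimal_generator S x <-> x \in a) ->
  is_conductor S c ->
  10 <= size a ->
  c + nth 0 a 0 < 3 * nth 0 a 1 ->
  100 * nth 0 a 0 + 125 <= 32 * (size a) ^ 2 + 20 * size a ->
  c <= size a * card_L S c.
Proof.
move=> [S0 Sadd _] srt hgen [hc _] h10 hA hmu.
set nu := size a in h10 hmu *.
set m := nth 0 a 0 in hA hmu *.
set A := nth 0 a 1 in hA.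
have aS : forall i, i < nu -> nth 0 a i \in S /\ 0 < nth 0 a i.
  move=> i hi.
  have [h1 h2 _] := proj2 (hgen (nth 0 a i)) (mem_nth 0 hi).
  by [].
have genS : forall g, g \in a -> g \in S /\ 0 < g.
  by move=> g ga; have [h1 h2 _] := proj2 (hgen g) ga.
have srtlt : forall i j, i < j -> j < nu -> nth 0 a i < nth 0 a j.
  move=> i j hij hj.
  apply: (sorted_ltn_nth ltn_trans 0 srt) => //; rewrite inE /=; rewrite -/nu; lia.
have [mS mpos] : m \in S /\ 0 < m by apply: aS; lia.
have Am : m < A by apply: srtlt; lia.
have mult : forall x t, x \in S -> x + t * m \in S.
  move=> x t xS; elim: t => [|t IH]; first by rewrite mul0n addn0.
  by rewrite mulSnr addnA; apply: Sadd.
have decomp : forall x, x \in S -> 0 < x -> ~ minimal_generator S x ->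
    exists y z, [/\ y \in S, z \in S, 0 < y, 0 < z & x = y + z].
  move=> x xS xp nmg; apply: NNPP => hne; apply: nmg; by split.
have Gl : forall x, x \in S -> 0 < x -> exists g, [/\ g \in a, g <= x & x - g \in S].
  elim/ltn_ind => x IH xS xp.
  case: (classic (minimal_generator S x)) => [mg|nmg].
    by exists x; split => //; [exact: (proj1 (hgen x) mg) | rewrite subnn].
  have [y [z [yS zS yp zp hx]]] := decomp x xS xp nmg.
  have yx : y < x by lia.
  rewrite hx.
  have [g [ga gy ygS]] := IH y yx yS yp.
  exists g; split => //; first lia.
  have -> : y + z - g = (y - g) + z by lia.
  exact: Sadd.
have ge_m : forall g, g \in a -> m <= g.
  move=> g ga; have hi : index g a < nu by rewrite index_mem.
  rewrite -(nth_index 0 ga); case: (posnP (index g a)) => [->|ip] //.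
  by apply: ltnW; apply: srtlt.
have ge_A : forall g, g \in a -> g != m -> A <= g.
  move=> g ga gm; have hi : index g a < nu by rewrite index_mem.
  rewrite -(nth_index 0 ga) in gm *.
  move: (index g a) hi gm => [|[|j]] hi gm //.
    by rewrite eqxx in gm.
  by apply: ltnW; apply: srtlt.
have gen_min : forall g, g \in a -> g != m -> forall y, y \in S -> y %% m = g %% m -> g <= y.
  move=> g ga gm y yS hy; rewrite leqNgt; apply/negP => yg.
  have [gS gp nex] := proj2 (hgen g) ga.
  have : m %| g - y by rewrite -eqn_mod_dvd ?(ltnW yg) // hy.
  case/dvdnP => t ht; apply: nex.
  case: (posnP y) => [y0|yp].
    subst y; rewrite subn0 in ht.
    case: t ht => [|[|t]] ht.
    - lia.
    - by move: gm; rewrite ht mul1n eqxx.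
    exists m, (t.+1 * m); split => //.
    + by rewrite -[_ * m]add0n; apply: mult.
    + lia.
  exists y, (t * m); split => //.
  - by rewrite -[_ * m]add0n; apply: mult.
  - case: t ht => [|t] ht; lia.
  - lia.
have gen_nz : forall g, g \in a -> g != m -> 0 < g %% m.
  move=> g ga gm; rewrite lt0n; apply/negP => /eqP h0.
  have := gen_min g ga gm 0 S0; rewrite mod0n h0 => /(_ erefl).
  have [_ gp] := genS g ga; lia.
pose w := fun r => find (fun x => (x \in S) && (x %% m == r)) (iota 0 (c + m)).
have wex : forall r, r < m -> has (fun x => (x \in S) && (x %% m == r)) (iota 0 (c + m)).
  move=> r rm; apply/hasP.
  set X := c + m - 1 - r.
  have e1 := divn_eq X m; have e2 := ltn_pmod X mpos.
  exists (r + X %/ m * m).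
    rewrite mem_iota /=; move: e1 e2; rewrite /X.
    move: (_ %/ m) (_ %% m) => q rr; lia.
  apply/andP; split.
    apply: hc; move: e1 e2; rewrite /X.
    move: (_ %/ m) (_ %% m) => q rr; lia.
  by rewrite addnC modnMDl modn_small.
have wP : forall r, r < m -> [/\ w r \in S, w r %% m = r & w r < c + m].
  move=> r rm; have hh := wex r rm.
  have := nth_find 0 hh; move: hh; rewrite has_find size_iota => hf.
  rewrite nth_iota // add0n => /andP [h1 /eqP h2]; by split.
have wmin : forall r y, y \in S -> y %% m = r -> w r <= y.
  move=> r y yS yr; rewrite leqNgt; apply/negP => lt.
  have hy : y < c + m.
    apply: (leq_trans lt); rewrite /w; have := find_size (fun x => (x \in S) && (x %% m == r)) (iota 0 (c + m)).
    by rewrite size_iota.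
  have := before_find 0 lt; rewrite nth_iota // add0n yS yr eqxx //.
have w0 : w 0 = 0.
  by apply/eqP; rewrite -leqn0; apply: wmin => //; rewrite mod0n.
have wgen : forall g, g \in a -> g != m -> w (g %% m) = g.
  move=> g ga gm; have [gS _] := genS g ga.
  have [h1 h2 h3] := wP (g %% m) (ltn_pmod g mpos).
  apply/eqP; rewrite eqn_leq wmin //= gen_min //.
have winj : forall r1 r2, r1 < m -> r2 < m -> w r1 = w r2 -> r1 = r2.
  move=> r1 r2 h1 h2 e; have [_ e1 _] := wP r1 h1; have [_ e2 _] := wP r2 h2.
  by rewrite -e1 -e2 e.

pose n := fun r => count (fun x => (x \in S) && (x %% m == r)) (iota 0 c).
have nP : forall r, r < m -> c <= n r * m + w r /\ n r * m + w r < c + m.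
  move=> r rm; have [wS wr wlt] := wP r rm.
  have -> : n r = count (fun x => (w r <= x) && (x %% m == w r %% m)) (iota 0 c).
    apply: eq_count => x /=; rewrite wr; apply/idP/idP.
      case/andP => xS /eqP xr; by rewrite wmin // xr eqxx.
    case/andP => le /eqP xr.
    have : m %| x - w r by rewrite -eqn_mod_dvd // xr wr.
    case/dvdnP => t ht.
    have -> : x = w r + t * m by lia.
    by rewrite mult //= -/(w r) -ht subnKC // xr eqxx.
  have := count_class m (w r) c mpos wlt; rewrite wr; lia.
have cardL : card_L S c = \sum_(0 <= r < m) n r.
  rewrite /card_L /n; elim: (iota 0 c) => [|x s IH]; first by rewrite big1.
  rewrite /= big_split /= -IH; congr (_ + _).
  case: (x \in S) => /=; last by rewrite big1.
  symmetry; apply: (etrans _ (sum_pick m (x %% m) (fun _ => 1) (ltn_pmod x mpos))).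
  by apply: eq_bigr => i _; rewrite muln1.

pose Gr := fun r => (0 < r) && (w r \in a).
pose Kr := fun r => [&& 0 < r, w r \in a & w r < c].
pose Pr := fun r => (0 < r) && (w r \notin a).
pose T := fun r s => (w r - w s) %% m.
pose Q := fun r s => [&& Kr s, Kr (T r s), w s <= w (T r s) & w s + w (T r s) == w r].
pose sr := fun r => find (Q r) (iota 0 m).
pose tr := fun r => T r (sr r).
have classif : forall r, r < m -> Pr r ->
    exists y z, [/\ y \in a, z \in a, y != m, z != m & w r = y + z].
  move=> r rm /andP [rp wna]; have [wS wr wlt] := wP r rm.
  have wp : 0 < w r by move: wr rp; case: (w r) => // <-; rewrite mod0n.
  have nmg : ~ minimal_generator S (w r).
    by move/(proj1 (hgen _)); rewrite (negbTE wna).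
  have [y [z [yS zS yp zp he]]] := decomp _ wS wp nmg.
  have notm : forall u v, u \in S -> v \in S -> w r = u + v -> m <= u -> u - m \in S -> False.
    move=> u v uS vS huv mu umS.
    have mle : m <= w r by apply: (ar5 _ _ _ _ huv mu).
    have : w r <= w r - m.
      apply: wmin; first by rewrite (ar4 _ _ _ _ huv mu); exact: Sadd.
      by move: wr; rewrite -{1}(subnK mle) modnDr.
    by move/(ar1 _ _ mpos wp).
  have cl : forall y z, y \in S -> z \in S -> 0 < y -> 0 < z -> w r = y + z -> (y \in a) /\ (y != m).
    move=> y' z' yS' zS' yp' zp' he'.
    have [g [ga gy ygS]] := Gl y' yS' yp'.
    have gm : g != m by apply/negP => /eqP e; subst g; exact: (notm y' z').
    have gA := ge_A g ga gm.
    have [g'' [ga'' gz zgS]] := Gl z' zS' zp'.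
    have gm'' : g'' != m.
      by apply/negP => /eqP e; subst g''; apply: (notm z' y') => //; rewrite addnC.
    have gA'' := ge_A g'' ga'' gm''.
    case: (posnP (y' - g)) => [e|pos].
      rewrite (ar2 _ _ e gy).
      by [].
    have [g' [ga' gy' ygS']] := Gl (y' - g) ygS pos.
    have gm' : g' != m.
      apply/negP => /eqP e; subst g'.
      have [gS _] := genS g ga.
      apply: (notm (y' - g) (g + z')) => //; [exact: Sadd | exact: ar3].
    have gA' := ge_A g' ga' gm'.
    have [_ _ wlt'] := wP r rm.
    exfalso; exact: (ar_cl _ _ _ _ _ _ _ _ _ he' gy gy' gz gA gA' gA'' wlt' hA).
  have [ya ym] := cl y z yS zS yp zp he.
  have he2 : w r = z + y by rewrite addnC.
  have [za zm] := cl z y zS yS zp yp he2.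
  by exists y, z.
have Pr_has : forall r, r < m -> Pr r -> has (Q r) (iota 0 m).
  move=> r rm pr; have [y [z [ya za ym zm he]]] := classif r rm pr.
  have wrlt : w r < c + m by have [_ _ h] := wP r rm.
  wlog yz : y z ya za ym zm he / y <= z.
    move=> H; case: (leqP y z) => [|zy]; first exact: H.
    by apply: (H z y) => //; [rewrite he addnC | exact: ltnW].
  apply/hasP; exists (y %% m); first by rewrite mem_iota /= ltn_pmod.
  have wy := wgen y ya ym; have wz := wgen z za zm.
  have Tz : T r (y %% m) = z %% m by rewrite /T wy he addKn.
  have yA := ge_A y ya ym; have zA := ge_A z za zm.
  rewrite /Q Tz wy wz he eqxx yz /Kr wy wz !gen_nz // ya za /=.
  by rewrite andbT; exact: (ar_yz _ _ _ _ _ _ he wrlt yA zA Am).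
have srP : forall r, r < m -> Pr r ->
    [/\ sr r < m, tr r < m, Kr (sr r), Kr (tr r) & w (sr r) <= w (tr r) /\ w (sr r) + w (tr r) = w r].
  move=> r rm pr; have hh := Pr_has r rm pr.
  have hs : sr r < m by move: (hh); rewrite has_find size_iota.
  have := nth_find 0 hh; rewrite nth_iota // add0n -/(sr r).
  case/and4P => h1 h2 h3 /eqP h4.
  split => //; by rewrite /tr /T ltn_pmod.

have nuP : 0 < nu by apply: leq_trans h10.
have a_nodup : uniq a by apply: (sorted_uniq ltn_trans ltnn srt).
have hG : \sum_(0 <= r < m) (Gr r : nat) = nu.-1.
  apply/eqP; rewrite eqn_leq; apply/andP; split.
  - have -> : nu.-1 = \sum_(0 <= i < nu) (0 < i : nat).
      rewrite big_ltn //= add0n.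
      rewrite (eq_big_nat _ _ (F2 := fun _ => 1)); last by move=> i /andP [h _]; rewrite h.
      by rewrite sum_nat_const_nat muln1 subn1.
    apply: (inj_sum _ _ _ _ (fun r => index (w r) a)).
      move=> r rm /andP [rp wa]; split; first by rewrite index_mem.
      rewrite lt0n; apply/negP => /eqP i0.
      have := nth_index 0 wa; rewrite i0 -/m => e.
      have [_ wr _] := wP r rm; move: wr; rewrite -e modnn => r0.
      by move: rp; rewrite -r0.
    move=> r1 r2 h1 h2 /andP [_ w1] /andP [_ w2] e.
    apply: winj => //; by rewrite -(nth_index 0 w1) -(nth_index 0 w2) e.
  - have -> : nu.-1 = \sum_(0 <= i < nu) (0 < i : nat).
      rewrite big_ltn //= add0n.
      rewrite (eq_big_nat _ _ (F2 := fun _ => 1)); last by move=> i /andP [h _]; rewrite h.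
      by rewrite sum_nat_const_nat muln1 subn1.
    apply: (inj_sum _ _ _ _ (fun i => nth 0 a i %% m)).
      move=> i hi ip.
      have ga : nth 0 a i \in a by rewrite mem_nth.
      have gm : nth 0 a i != m by rewrite gtn_eqF //; apply: srtlt.
      split; first by rewrite ltn_pmod.
      by rewrite /Gr gen_nz //= wgen.
    move=> i1 i2 h1 h2 p1 p2 e.
    have g1 : nth 0 a i1 != m by rewrite gtn_eqF //; apply: srtlt.
    have g2 : nth 0 a i2 != m by rewrite gtn_eqF //; apply: srtlt.
    have e' : nth 0 a i1 = nth 0 a i2.
      by rewrite -(wgen _ (mem_nth 0 h1) g1) -(wgen _ (mem_nth 0 h2) g2) e.
    by apply/eqP; rewrite -(nth_uniq 0 h1 h2 a_nodup) e'.

set p := \sum_(0 <= r < m) (Pr r : nat).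
set k := \sum_(0 <= r < m) (Kr r : nat).
have hm : m = nu + p.
  have e1 : \sum_(0 <= r < m) 1 = m by rewrite sum_nat_const_nat muln1 subn0.
  have e2 : \sum_(0 <= r < m) 1 = \sum_(0 <= r < m) ((0 == r) * 1 + (Gr r : nat) + (Pr r : nat)).
    apply: eq_big_nat => r _; rewrite /Gr /Pr.
    by case: r => [|r] //=; case: (w r.+1 \in a).
  rewrite -{1}e1 e2 !big_split /= sum_pick // hG /p.
  by case: (nu) nuP.
have hL2 : n 0 + \sum_(0 <= r < m) Kr r * n r + \sum_(0 <= r < m) Pr r * n r <= \sum_(0 <= r < m) n r.
  rewrite -(sum_pick m 0 n mpos) -!big_split /=.
  apply: leq_sum => r _.
  have ind : (0 == r) + Kr r + Pr r <= 1.
    by rewrite /Kr /Pr; case: r => [|r] //=; case: (w r.+1 \in a) => //=; case: (_ < c).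
  by rewrite -!mulnDl; apply: (leq_trans (leq_mul ind (leqnn _))); rewrite mul1n.
have hk : k <= nu.-1.
  rewrite -hG; apply: leq_sum => r _; case Kh: (Kr r) => //.
  by move: Kh => /and3P [h1 h2 _]; rewrite /Gr h1 h2.
have hn1 : forall s, s < m -> Kr s -> 0 < n s.
  move=> s sm /and3P [_ _ ws]; have [h1 _] := nP s sm.
  rewrite lt0n; apply/negP => /eqP e; move: h1; rewrite e mul0n add0n => h1.
  by move: (leq_ltn_trans h1 ws); rewrite ltnn.

pose D1 := fun s => \sum_(0 <= r < m) (Pr r && (sr r == s) : nat).
pose D2 := fun s => \sum_(0 <= r < m) (Pr r && (tr r == s) : nat).
have hsr : forall r, r < m -> Pr r -> sr r < m by move=> r rm pr; have [] := srP r rm pr.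
have htr : forall r, r < m -> Pr r -> tr r < m by move=> r rm pr; have [] := srP r rm pr.
have hD1 : forall s, s < m -> D1 s <= \sum_(0 <= u < m) (Kr u && (w s <= w u) : nat).
  move=> s sm; apply: (inj_sum _ _ _ _ tr).
    move=> r rm /andP [pr /eqP e]; have [hs ht Ks Kt [le eq]] := srP r rm pr.
    by split => //; rewrite Kt -e le.
  move=> r1 r2 h1 h2 /andP [p1 /eqP e1] /andP [p2 /eqP e2] et.
  have [_ _ _ _ [_ q1]] := srP r1 h1 p1; have [_ _ _ _ [_ q2]] := srP r2 h2 p2.
  by apply: winj => //; rewrite -q1 -q2 e1 e2 et.
have hD2 : forall s, s < m -> D2 s <= \sum_(0 <= u < m) (Kr u && (w u <= w s) : nat).
  move=> s sm; apply: (inj_sum _ _ _ _ sr).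
    move=> r rm /andP [pr /eqP e]; have [hs ht Ks Kt [le eq]] := srP r rm pr.
    by split => //; rewrite Ks -e le.
  move=> r1 r2 h1 h2 /andP [p1 /eqP e1] /andP [p2 /eqP e2] et.
  have [_ _ _ _ [_ q1]] := srP r1 h1 p1; have [_ _ _ _ [_ q2]] := srP r2 h2 p2.
  by apply: winj => //; rewrite -q1 -q2 e1 e2 et.
have hB : forall s, s < m -> \sum_(0 <= u < m) (Kr u && (w s <= w u) : nat) +
    \sum_(0 <= u < m) (Kr u && (w u <= w s) : nat) <= k.+1.
  move=> s sm; rewrite -big_split /=.
  apply: (@leq_trans (\sum_(0 <= u < m) ((Kr u : nat) + (s == u) * 1))).
    apply: leq_sum_lt => u um.
    case Ku: (Kr u) => //=.
    case: (eqVneq s u) => [<-|ne]; first by rewrite leqnn.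
    have nb : ~~ ((w s <= w u) && (w u <= w s)).
      apply/negP => /andP [h1 h2]; move/eqP: ne; apply.
      by apply: winj => //; apply/eqP; rewrite eqn_leq h1 h2.
    by move: nb; case: (w s <= w u); case: (w u <= w s).
  by rewrite big_split /= sum_pick // addn1.
have hdeg : forall s, s < m -> Kr s -> D1 s + D2 s <= k.+1.
  by move=> s sm _; apply: leq_trans (hB s sm); apply: leq_add; [exact: hD1 | exact: hD2].
have hdeg0 : forall s, s < m -> ~~ Kr s -> D1 s + D2 s = 0.
  move=> s sm nK.
  rewrite /D1 /D2 !big1_seq // => r /andP [_]; rewrite mem_index_iota => /andP [_ rm];
    case pr: (Pr r) => //=; have [_ _ Ks Kt _] := srP r rm pr.
    by case: eqP => // e; move: nK; rewrite -e ?Ks ?Kt => /negP H; exfalso; apply: H.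
  by case: eqP => // e; move: nK; rewrite -e ?Ks ?Kt => /negP H; exfalso; apply: H.
have hZ : \sum_(0 <= r < m) Pr r * (n (sr r) + n (tr r)) = \sum_(0 <= s < m) (D1 s + D2 s) * n s.
  rewrite (eq_bigr (fun r => Pr r * n (sr r) + Pr r * n (tr r))); last by move=> r _; rewrite mulnDr.
  rewrite big_split /= (exch m Pr sr n hsr) (exch m Pr tr n htr) -big_split /=.
  by apply: eq_bigr => s _; rewrite mulnDl.
have hdeg2 : \sum_(0 <= s < m) (D1 s + D2 s) = 2 * p.
  have e1 := exch m Pr sr (fun _ => 1) hsr; have e2 := exch m Pr tr (fun _ => 1) htr.
  have ep : \sum_(0 <= r < m) Pr r * 1 = p by apply: eq_bigr => r _; rewrite muln1.
  transitivity (\sum_(0 <= s < m) D1 s * 1 + \sum_(0 <= s < m) D2 s * 1).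
    by rewrite big_split; congr (_ + _); apply: eq_bigr => s _; rewrite muln1.
  by rewrite -e1 -e2 ep addnn -mul2n.
have F4 : \sum_(0 <= s < m) (D1 s + D2 s) * n s + nu * k <=
    nu * \sum_(0 <= r < m) Kr r * n r + 2 * p.
  have : \sum_(0 <= s < m) ((D1 s + D2 s) * n s + nu * Kr s) <=
      \sum_(0 <= s < m) (nu * (Kr s * n s) + (D1 s + D2 s)).
    apply: leq_sum_lt => s sm; case Ks: (Kr s).
      rewrite mul1n muln1; apply: ar6; last exact: hn1.
      apply: leq_trans (hdeg s sm Ks) _; by rewrite -(prednK nuP) ltnS.
    by rewrite hdeg0 ?Ks // !mul0n !muln0.
  move=> H; rewrite -hdeg2; move: H; rewrite !big_split -!big_distrr /=; exact: id.
have F5 : 2 * p <= k * k.+1.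
  rewrite -hdeg2 /k big_distrl /=; apply: leq_sum_lt => s sm; case Ks: (Kr s).
    by rewrite mul1n; apply: hdeg.
  by rewrite hdeg0 ?Ks.
have F6 : p * (2 * c) + m * \sum_(0 <= r < m) Pr r * n r <=
    \sum_(0 <= r < m) Pr r * (n r * m + w r) + m * \sum_(0 <= r < m) Pr r * (n (sr r) + n (tr r)).
  have : \sum_(0 <= r < m) (Pr r * (2 * c) + m * (Pr r * n r)) <=
      \sum_(0 <= r < m) (Pr r * (n r * m + w r) + m * (Pr r * (n (sr r) + n (tr r)))).
    apply: leq_sum_lt => r rm; case pr: (Pr r); last by rewrite !mul0n !muln0.
    rewrite !mul1n; have [hs ht _ _ [_ he]] := srP r rm pr.
    rewrite -he; apply: ar7; [exact: (nP _ hs).1 | exact: (nP _ ht).1].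
  by rewrite !big_split -big_distrl -!big_distrr /=.

pose e' := fun r => c + m - (n r * m + w r).
have hsum : \sum_(0 <= r < m) Pr r * (n r * m + w r) + \sum_(0 <= r < m) Pr r * e' r = p * (c + m).
  rewrite -big_split /p big_distrl /=; apply: eq_big_nat => r /andP [_ rm].
  by rewrite -mulnDr ar8 //; exact: (nP r rm).2.
have hp : p = count Pr (iota 0 m) by rewrite /p sum_bool_count /index_iota subn0.
have hds : p * p.+1 <= 2 * \sum_(0 <= r < m) Pr r * e' r.
  have hus : uniq (map e' (filter Pr (iota 0 m))).
    rewrite map_inj_in_uniq ?filter_uniq ?iota_uniq //.
    move=> x y; rewrite !mem_filter !mem_iota /= => /andP [_ hx] /andP [_ hy] exy.
    have eE := ar9 _ _ _ (nP x hx).2 (nP y hy).2 exy.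
    have [_ wx _] := wP x hx; have [_ wy _] := wP y hy.
    have : (n x * m + w x) %% m = (n y * m + w y) %% m by rewrite eE.
    by rewrite !modnMDl wx wy.
  have hps : all (fun x => 0 < x) (map e' (filter Pr (iota 0 m))).
    apply/allP => y /mapP [x]; rewrite mem_filter mem_iota /= => /andP [_ hx] ->.
    by rewrite /e' subn_gt0; exact: (nP x hx).2.
  have := ds _ hus hps.
  rewrite size_map size_filter -hp.
  have -> : sumn (map e' (filter Pr (iota 0 m))) = \sum_(0 <= r < m) Pr r * e' r.
    rewrite sumnE big_map big_filter big_mkcond /index_iota subn0.
    by apply: eq_bigr => r _; case: (Pr r); rewrite ?mul1n ?mul0n.
  by [].
have F7 : 2 * \sum_(0 <= r < m) Pr r * (n r * m + w r) + p * p.+1 <= 2 * (p * (c + m)).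
  exact: (ar10 _ _ _ _ hsum hds).
have hc0 : c <= n 0 * m by have := (nP 0 mpos).1; rewrite w0 addn0.
have AR := arith nu m p k h10 hm hmu F5.
rewrite hZ in F6.
rewrite cardL.
exact: (final_ar c m nu p k _ (n 0) _ _ _ _ mpos hm hc0 hL2 F4 F6 F7 AR).
Qed.
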